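(* For every real $u>0$, $$\sum_{q\ge 1}\frac{\Lambda(q)}{q^{1+u}}=-\frac{\zeta'(1+u)}{\zeta(1+u)}\le\frac{\log 2}{2^u-1}\le\frac{1}{u}.$$
   Context: $\Lambda$ is the von Mangoldt function ($\Lambda(q)=\log p$ if $q=p^j$ for a prime $p$ and $j\ge1$, and $\Lambda(q)=0$ otherwise); $\zeta$ is the Riemann zeta function. *)

(* Defs.v *)
From Stdlib Require Import Reals ZArith Znumtheory ClassicalEpsilon.
From Coquelicot Require Import Coquelicot.
Open Scope R_scope.

Definition nat_prime (p : nat) : Prop := prime (Z.of_nat p).

Definition prime_power_base (q p : nat) : Prop :=
  nat_prime p /\ exists j : nat, (1 <= j)%nat /\ q = Nat.pow p j.

(* von Mangoldt function: Lambda(q) = log p if q = p^j (p prime, j >= 1), else 0.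
   The prime p is unique when it exists; we pick it by Hilbert's epsilon. *)
Definition vonMangoldt (q : nat) : R :=
  match excluded_middle_informative (exists p : nat, prime_power_base q p) with
  | left _ => ln (INR (epsilon (inhabits 0%nat) (prime_power_base q)))
  | right _ => 0
  end.

Definition zeta (s : R) : R := Series (fun n : nat => / Rpower (INR (S n)) s).

(* Main.v *)
Require Import Defs.
From Stdlib Require Import Reals Lra Lia Ranalysis5 ZArith.
From Coquelicot Require Import Coquelicot.
Open Scope R_scope.

Fixpoint ps (f : nat -> R) (N : nat) : R :=
  match N with O => 0 | S n => ps f n + f (S n) end.

Definition T (s : R) (k : nat) : R := / Rpower (INR k) s.

Lemma Rpower_pos x y : 0 < Rpower x y.
Proof. unfold Rpower. apply exp_pos. Qed.

Lemma INR_S_pos k : 0 < INR (S k).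
Proof. apply lt_0_INR. lia. Qed.

Lemma T_pos s k : 0 < T s k.
Proof. unfold T. apply Rinv_0_lt_compat, Rpower_pos. Qed.

Lemma ln_le_sub1 y : 0 < y -> ln y <= y - 1.
Proof. intro h. pose proof (exp_ineq1_le (ln y)). rewrite exp_ln in H; lra. Qed.

Lemma exp_le_mono x y : x <= y -> exp x <= exp y.
Proof. intro h. destruct (Rle_lt_or_eq_dec x y h) as [h'|h'].
  - left. now apply exp_increasing. - subst; lra. Qed.

Lemma Rpower_base1 y : Rpower 1 y = 1.
Proof. unfold Rpower. rewrite ln_1, Rmult_0_r. apply exp_0. Qed.

Lemma sum_n_ps f N : sum_n (fun n => f (S n)) N = ps f (S N).
Proof.
  induction N as [|N IH].
  - rewrite sum_O. simpl. lra.
  - rewrite sum_Sn, IH. simpl. unfold plus. simpl. lra.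
Qed.

Lemma series_lim a l : is_series a l <-> is_lim_seq (sum_n a) l.
Proof.
  rewrite is_series_Reals, is_lim_seq_Reals.
  split; intros H eps he; destruct (H eps he) as [N HN]; exists N; intros n hn;
  specialize (HN n hn); rewrite ?sum_n_Reals in *; exact HN.
Qed.

Lemma series_ps f l : is_series (fun n => f (S n)) l <-> is_lim_seq (ps f) l.
Proof.
  rewrite series_lim. rewrite (is_lim_seq_incr_1 (ps f)).
  split; apply is_lim_seq_ext; intro n; now rewrite sum_n_ps.
Qed.

Lemma ps_mono_nat f M N : (forall d, 0 <= f (S d)) -> (M <= N)%nat -> ps f M <= ps f N.
Proof.
  intros H h. induction h; [lra|]. simpl. specialize (H m). lra.
Qed.

Lemma bernoulli_neg t a : 0 < t -> a <= 0 -> 1 + a * (t - 1) <= Rpower t a.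
Proof.
  intros ht ha. unfold Rpower. pose proof (exp_ineq1_le (a * ln t)).
  pose proof (ln_le_sub1 t ht). nra.
Qed.

Lemma T_step σ N : 1 < σ -> (1 <= N)%nat ->
  (σ - 1) * T σ (S N) <= Rpower (INR N) (1 - σ) - Rpower (INR (S N)) (1 - σ).
Proof.
  intros hσ hN.
  set (x := INR N). set (y := INR (S N)).
  assert (hx : 0 < x) by (unfold x; apply lt_0_INR; lia).
  assert (hy : y = x + 1) by (unfold y, x; rewrite S_INR; lra).
  assert (hy0 : 0 < y) by lra.
  assert (Ey : Rpower y (1 - σ) = y * T σ (S N)).
  { unfold T. fold y. replace (1 - σ) with (1 + - σ) by ring.
    rewrite Rpower_plus, Rpower_1 by exact hy0. rewrite Rpower_Ropp. reflexivity. }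
  assert (Ex : Rpower x (1 - σ) = Rpower y (1 - σ) * Rpower (x / y) (1 - σ)).
  { rewrite Rpower_mult_distr; try lra.
    - f_equal. field. lra.
    - apply Rdiv_lt_0_compat; lra. }
  pose proof (bernoulli_neg (x / y) (1 - σ) ltac:(apply Rdiv_lt_0_compat; lra) ltac:(lra)) as B.
  assert (hxy : x / y - 1 = - / y) by (rewrite hy; field; lra).
  rewrite hxy in B.
  rewrite Ex, Ey.
  pose proof (T_pos σ (S N)) as hT.
  set (t := T σ (S N)) in *.
  assert (y * t * (1 + (1 - σ) * - / y) = y * t + (σ - 1) * t) by (field; lra).
  assert (0 < y * t) by nra.
  nra.
Qed.

Lemma ps_T_bound σ N : 1 < σ -> ps (T σ) N <= σ / (σ - 1).
Proof.
  intro hσ.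
  assert (H : forall N, (1 <= N)%nat -> ps (T σ) N <= 1 + (1 - Rpower (INR N) (1 - σ)) * / (σ - 1)).
  { intros M hM. induction hM.
    - change (ps (T σ) 1) with (0 + T σ 1). unfold T. change (INR 1) with 1.
      rewrite !Rpower_base1. rewrite Rinv_1. lra.
    - change (ps (T σ) (S m)) with (ps (T σ) m + T σ (S m)).
      pose proof (T_step σ m hσ hM).
      set (k := / (σ - 1)) in *.
      assert (hk : (σ - 1) * k = 1) by (unfold k; field; lra).
      assert (hk0 : 0 < k) by (unfold k; apply Rinv_0_lt_compat; lra).
      set (t := T σ (S m)) in *.
      assert (t <= (Rpower (INR m) (1 - σ) - Rpower (INR (S m)) (1 - σ)) * k).
      { replace t with ((σ - 1) * t * k) by (rewrite (Rmult_comm (σ - 1) t), Rmult_assoc, hk; ring).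
        apply Rmult_le_compat_r; lra. }
      lra. }
  destruct N as [|N].
  - simpl. apply Rlt_le, Rdiv_lt_0_compat; lra.
  - apply Rle_trans with (1 := H (S N) ltac:(lia)).
    pose proof (Rpower_pos (INR (S N)) (1 - σ)).
    assert (hk0 : 0 < / (σ - 1)) by (apply Rinv_0_lt_compat; lra).
    apply Rle_trans with (1 + 1 * / (σ - 1)).
    + apply Rplus_le_compat_l. apply Rmult_le_compat_r; lra.
    + right. field. lra.
Qed.

Lemma is_series_T σ : 1 < σ -> exists l : R, is_lim_seq (ps (T σ)) l.
Proof.
  intro hσ. apply ex_finite_lim_seq_incr with (σ / (σ - 1)).
  - intro n. simpl. pose proof (T_pos σ (S n)). lra.
  - intro n. now apply ps_T_bound.
Qed.

Lemma ex_series_T σ : 1 < σ -> ex_series (fun n => T σ (S n)).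
Proof.
  intro hσ. destruct (is_series_T σ hσ) as [l hl]. exists l. now apply series_ps.
Qed.
Definition bt (s : R) (k : nat) : R := ln (INR k) * T s k.

Lemma ln_bound ε x : 0 < ε -> 0 < x -> ln x <= Rpower x ε / ε.
Proof.
  intros he hx. pose proof (ln_le_sub1 (Rpower x ε) (Rpower_pos _ _)).
  unfold Rpower in *. rewrite ln_exp in H.
  apply Rmult_le_reg_l with ε; [lra|].
  replace (ε * (exp (ε * ln x) / ε)) with (exp (ε * ln x)) by (field; lra). lra.
Qed.

Lemma ln_INR_S_ge0 k : 0 <= ln (INR (S k)).
Proof. rewrite <- ln_1. destruct k as [|k].
  - simpl. lra.
  - left. apply ln_increasing; [lra|]. change 1 with (INR 1). apply lt_INR. lia. Qed.

Lemma bt_ge0 s k : 0 <= bt s (S k).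
Proof. unfold bt. pose proof (ln_INR_S_ge0 k). pose proof (T_pos s (S k)). nra. Qed.

Lemma bt_le σ k : 1 < σ -> bt σ (S k) <= (2 / (σ - 1)) * T ((1 + σ) / 2) (S k).
Proof.
  intro hσ. unfold bt, T.
  set (y := INR (S k)). assert (hy : 0 < y) by apply INR_S_pos.
  set (ε := (σ - 1) / 2).
  pose proof (ln_bound ε y ltac:(unfold ε; lra) hy).
  assert (E : Rpower y σ = Rpower y ((1 + σ) / 2) * Rpower y ε).
  { rewrite <- Rpower_plus. f_equal. unfold ε. field. }
  rewrite E. rewrite Rinv_mult.
  pose proof (Rpower_pos y ε). pose proof (Rpower_pos y ((1 + σ) / 2)).
  assert (0 < / Rpower y ((1 + σ) / 2)) by (apply Rinv_0_lt_compat; lra).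
  assert (0 < / Rpower y ε) by (apply Rinv_0_lt_compat; lra).
  apply Rle_trans with (Rpower y ε / ε * (/ Rpower y ((1 + σ) / 2) * / Rpower y ε)).
  - apply Rmult_le_compat_r; nra.
  - right. replace (Rpower y ε / ε) with (Rpower y ε * (2 / (σ - 1))) by (unfold ε; field; lra).
    field. repeat split; lra.
Qed.

Lemma ex_series_bt σ : 1 < σ -> ex_series (fun k => bt σ (S k)).
Proof.
  intro hσ. apply (@ex_series_le R_AbsRing R_CompleteNormedModule) with (fun k => (2 / (σ - 1)) * T ((1 + σ) / 2) (S k)).
  - intro n. rewrite Rabs_pos_eq by apply bt_ge0. now apply bt_le.
  - apply (ex_series_scal_l (K := R_AbsRing) (V := R_NormedModule)) with (c := 2 / (σ - 1)) (a := fun k => T ((1 + σ) / 2) (S k)).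
    apply ex_series_T. lra.
Qed.

Lemma series_nonneg a : (forall n, 0 <= a n) -> ex_series a -> 0 <= Series a.
Proof.
  intros H ex. assert (Series (fun _ => 0) = 0).
  { apply is_series_unique. apply series_lim. apply is_lim_seq_ext with (fun _ => 0).
    - intro n. induction n. + now rewrite sum_O. + rewrite sum_Sn, <- IHn. unfold plus; simpl; ring.
    - apply is_lim_seq_const. }
  rewrite <- H0. apply Series_le; auto. intro n; split; [lra| auto].
Qed.

Lemma tail_bound a M n : (forall k, 0 <= a k <= M k) -> ex_series M ->
  0 <= Series a - sum_n a n <= Series M - sum_n M n.
Proof.
  intros H exM.
  assert (exa : ex_series a).
  { apply (@ex_series_le R_AbsRing R_CompleteNormedModule) with M; auto. intro k. rewrite Rabs_pos_eq; apply H. }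
  rewrite (Series_incr_n a (S n)) by (lia || auto).
  rewrite (Series_incr_n M (S n)) by (lia || auto).
  rewrite !sum_n_Reals. simpl pred.
  split.
  - apply Rle_trans with (Series (fun k => a (S n + k)%nat)); [|right; ring].
    apply series_nonneg. intro; apply H. now apply ex_series_incr_n.
  - apply Rle_trans with (Series (fun k => a (S n + k)%nat)); [right; ring|].
    apply Rle_trans with (Series (fun k => M (S n + k)%nat)); [|right; ring].
    apply Series_le. intro; apply H. now apply ex_series_incr_n.
Qed.

Lemma derive_Tc (c : R) (k : nat) (y : R) :
  is_derive (fun y => c * T y (S k)) y (- c * ln (INR (S k)) * T y (S k)).
Proof.
  unfold T, Rpower. generalize (ln (INR (S k))). intro L. auto_derive.
  - pose proof (exp_pos (y * L)). lra.
  - pose proof (exp_pos (y * L)). field. lra.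
Qed.

Lemma derive_sum (c : nat -> R) n y :
  derivable_pt_lim (fun y => sum_n (fun k => c k * T y (S k)) n) y
    (sum_n (fun k => - c k * ln (INR (S k)) * T y (S k)) n).
Proof.
  apply is_derive_Reals.
  apply (@is_derive_sum_n R_AbsRing R_NormedModule (fun k y => c k * T y (S k))).
  intros k _. apply derive_Tc.
Qed.

Definition fnc (c : nat -> R) (n : nat) (y : R) := sum_n (fun k => c k * T y (S k)) n.

Lemma T_mono s1 s2 k : s1 <= s2 -> T s2 (S k) <= T s1 (S k).
Proof.
  intro h. unfold T. apply Rinv_le_contravar; [apply Rpower_pos|].
  unfold Rpower. apply exp_le_mono. apply Rmult_le_compat_r; [|lra].
  apply ln_INR_S_ge0.
Qed.

Lemma sum_neg_bt y n : @eq R (sum_n (fun k => - ln (INR (S k)) * T y (S k)) n) (- sum_n (fun k => bt y (S k)) n).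
Proof.
  rewrite !sum_n_Reals. unfold bt. induction n as [|n IH].
  - simpl. ring.
  - rewrite !tech5, IH. ring.
Qed.

Lemma zeta_deriv s : 1 < s -> is_derive zeta s (- Series (fun k => bt s (S k))).
Proof.
  intro hs.
  assert (hr : 0 < (s - 1) / 2) by lra.
  set (r := mkposreal _ hr).
  set (σ0 := s - (s - 1) / 2).
  assert (hσ0 : 1 < σ0) by (unfold σ0; lra).
  assert (Hb : forall y, Boule s r y -> σ0 < y).
  { intros y hy. unfold Boule in hy. simpl in hy. apply Rabs_def2 in hy. unfold σ0. lra. }
  set (g := fun y => - Series (fun k => bt y (S k))).
  set (fn := fnc (fun _ => 1)).
  set (fn' := fnc (fun k => - ln (INR (S k)))).
  assert (Hd : forall c y n, derivable_pt_lim (fnc c n) y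
     (sum_n (fun k => - c k * ln (INR (S k)) * T y (S k)) n)) by (intros; apply derive_sum).
  assert (Hcv : CVU fn' g s r).
  { intros eps he.
    assert (exM := ex_series_bt σ0 hσ0).
    pose proof (Series_correct _ exM) as HM. apply series_lim in HM.
    apply is_lim_seq_Reals in HM. destruct (HM eps he) as [N HN].
    exists N. intros n y hn hy. specialize (HN n hn).
    assert (hy' := Hb y hy).
    pose proof (tail_bound (fun k => bt y (S k)) (fun k => bt σ0 (S k)) n) as TB.
    destruct TB as [TB1 TB2].
    { intro k. split; [apply bt_ge0|]. unfold bt.
      apply Rmult_le_compat_l; [apply ln_INR_S_ge0|]. apply T_mono. lra. }
    { exact exM. }
    unfold Rdist in HN. rewrite Rabs_minus_sym in HN. rewrite Rabs_pos_eq in HN by (eapply Rle_trans; [exact TB1| exact TB2]).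
    unfold g, fn', fnc.
    rewrite sum_neg_bt.
    rewrite Rabs_minus_sym. replace (- sum_n (fun k : nat => bt y (S k)) n - - Series (fun k : nat => bt y (S k)))
      with (Series (fun k : nat => bt y (S k)) - sum_n (fun k : nat => bt y (S k)) n) by ring.
    rewrite Rabs_pos_eq by exact TB1. eapply Rle_lt_trans; [exact TB2 | exact HN]. }
  apply is_derive_Reals.
  apply (derivable_pt_lim_CVU fn fn' zeta g s s r).
  - unfold Boule. simpl. rewrite Rminus_diag, Rabs_R0. exact hr.
  - intros y n hy. unfold fn'.
    assert (E : forall a : R, - 1 * a = - a) by (intro; ring).
    pose proof (Hd (fun _ => 1) y n) as D. unfold fnc.
    replace (sum_n (fun k => - ln (INR (S k)) * T y (S k)) n)
      with (sum_n (fun k => - 1 * ln (INR (S k)) * T y (S k)) n).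
    + exact D.
    + apply sum_n_ext. intro k. now rewrite E.
  - intros y hy. assert (hy' := Hb y hy).
    pose proof (Series_correct _ (ex_series_T y ltac:(lra))) as HS.
    apply series_lim in HS. apply is_lim_seq_Reals.
    unfold zeta. unfold fn, fnc.
    apply is_lim_seq_ext with (2 := HS). intro n. apply sum_n_ext. intro k.
    now rewrite Rmult_1_l.
  - exact Hcv.
  - intros y hy. apply (CVU_continuity fn' g s r Hcv); [|exact hy].
    intros n z _. apply derivable_continuous_pt. exists (sum_n (fun k => - (- ln (INR (S k))) * ln (INR (S k)) * T z (S k)) n).
    apply Hd.
Qed.

Lemma ln_le_mono x y : 0 < x -> x <= y -> ln x <= ln y.
Proof. intros hx h. destruct (Rle_lt_or_eq_dec x y h) as [h'|h'].
  - left. now apply ln_increasing. - subst; lra. Qed.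

Lemma div_le_cross A B C D : 0 < B -> 0 < D -> A * D <= C * B -> A / B <= C / D.
Proof.
  intros hB hD h.
  replace (A / B) with ((A * D) * / (B * D)) by (field; lra).
  replace (C / D) with ((C * B) * / (B * D)) by (field; lra).
  apply Rmult_le_compat_r; [|exact h].
  apply Rlt_le, Rinv_0_lt_compat. nra.
Qed.

Lemma frac_pow_le (a b c d : Z) (p q : nat) : (0 < b)%Z -> (0 < d)%Z ->
  (a ^ Z.of_nat p * d ^ Z.of_nat q <= c ^ Z.of_nat q * b ^ Z.of_nat p)%Z ->
  (IZR a / IZR b) ^ p <= (IZR c / IZR d) ^ q.
Proof.
  intros hb hd h.
  unfold Rdiv. rewrite !Rpow_mult_distr, !pow_inv.
  apply div_le_cross.
  - apply pow_lt. now apply IZR_lt.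
  - apply pow_lt. now apply IZR_lt.
  - rewrite !pow_IZR, <- !mult_IZR. now apply IZR_le.
Qed.

Lemma pow_lt_le_ln x U (p q : nat) : 0 < x -> 0 < U -> x ^ p <= U ^ q ->
  INR p * ln x <= INR q * ln U.
Proof.
  intros hx hU h. rewrite <- !ln_pow by lra. apply ln_le_mono; [apply pow_lt; lra| exact h].
Qed.

Definition ee (n s : R) := exp (s * ln (2 / n)).

Lemma ee_ub n U (p q : nat) a s : 2 < n -> 0 < U -> (0 < q)%nat ->
  (2 / n) ^ p <= U ^ q -> a * INR q = INR p -> a <= s -> ee n s <= U.
Proof.
  intros hn hU hq h ha hs. unfold ee.
  assert (hx : 0 < 2 / n) by (apply Rdiv_lt_0_compat; lra).
  assert (hl : ln (2 / n) < 0).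
  { rewrite <- ln_1. apply ln_increasing; [exact hx|]. apply Rmult_lt_reg_r with n; [lra|].
    unfold Rdiv. rewrite Rmult_assoc, Rinv_l; lra. }
  pose proof (pow_lt_le_ln _ _ p q hx hU h) as L.
  rewrite <- ha in L.
  assert (hq' : 0 < INR q) by (apply lt_0_INR; lia).
  assert (a * ln (2 / n) <= ln U).
  { apply Rmult_le_reg_l with (INR q); [exact hq'|]. nra. }
  rewrite <- (exp_ln U) by exact hU. apply exp_le_mono. nra.
Qed.

Lemma ee_lb n L (p q : nat) c s : 2 < n -> 0 < L -> (0 < q)%nat ->
  L ^ q <= (2 / n) ^ p -> c * INR q = INR p -> s <= c -> L <= ee n s.
Proof.
  intros hn hL hq h hc hs. unfold ee.
  assert (hx : 0 < 2 / n) by (apply Rdiv_lt_0_compat; lra).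
  assert (hl : ln (2 / n) < 0).
  { rewrite <- ln_1. apply ln_increasing; [exact hx|]. apply Rmult_lt_reg_r with n; [lra|].
    unfold Rdiv. rewrite Rmult_assoc, Rinv_l; lra. }
  pose proof (pow_lt_le_ln _ _ q p hL hx h) as L'.
  rewrite <- hc in L'.
  assert (hq' : 0 < INR q) by (apply lt_0_INR; lia).
  assert (ln L <= c * ln (2 / n)).
  { apply Rmult_le_reg_l with (INR q); [exact hq'|]. nra. }
  rewrite <- (exp_ln L) by exact hL. apply exp_le_mono. nra.
Qed.

Definition HH s := ln 2 - ln 3 * ee 3 s + ln 4 * ee 4 s - ln 5 * ee 5 s + ln 6 * ee 6 s - ln 7 * ee 7 s.

Ltac numpow := apply frac_pow_le; [reflexivity | reflexivity | apply Z.leb_le; vm_compute; reflexivity].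
Ltac inrq := rewrite ?INR_IZR_INZ; simpl; lra.

Lemma ln_ratio_le x y (p q : nat) : 0 < x -> 0 < y -> x ^ p <= y ^ q -> (0 < p)%nat ->
  ln x <= (INR q / INR p) * ln y.
Proof.
  intros hx hy h hp. pose proof (pow_lt_le_ln x y p q hx hy h).
  assert (0 < INR p) by (apply lt_0_INR; lia).
  apply Rmult_le_reg_l with (INR p); [lra|].
  replace (INR p * (INR q / INR p * ln y)) with (INR q * ln y) by (field; lra). lra.
Qed.

Lemma ln2_pos : 0 < ln 2.
Proof. rewrite <- ln_1. apply ln_increasing; lra. Qed.

Lemma ln3_ub : ln 3 <= (793/500) * ln 2.
Proof.
  replace (793/500) with (INR 793 / INR 500) by inrq.
  apply ln_ratio_le; [lra|lra| |lia]. rewrite !pow_IZR. apply IZR_le.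
  apply Z.leb_le; vm_compute; reflexivity.
Qed.

Lemma ln3_lb : (1583/1000) * ln 2 <= ln 3.
Proof.
  pose proof ln2_pos.
  assert (h : ln 2 <= (INR 1000 / INR 1583) * ln 3).
  { apply ln_ratio_le; [lra|lra| |lia]. rewrite !pow_IZR. apply IZR_le.
    apply Z.leb_le; vm_compute; reflexivity. }
  replace (INR 1000 / INR 1583) with (1000/1583) in h by inrq. lra.
Qed.

Lemma ln5_ub : ln 5 <= (2323/1000) * ln 2.
Proof.
  replace (2323/1000) with (INR 2323 / INR 1000) by inrq.
  apply ln_ratio_le; [lra|lra| |lia]. rewrite !pow_IZR. apply IZR_le.
  apply Z.leb_le; vm_compute; reflexivity.
Qed.

Lemma ln7_ub : ln 7 <= (2809/1000) * ln 2.
Proof.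
  replace (2809/1000) with (INR 2809 / INR 1000) by inrq.
  apply ln_ratio_le; [lra|lra| |lia]. rewrite !pow_IZR. apply IZR_le.
  apply Z.leb_le; vm_compute; reflexivity.
Qed.

Lemma ln4_eq : ln 4 = 2 * ln 2.
Proof. replace 4 with (2 * 2) by lra. rewrite ln_mult by lra. ring. Qed.
Lemma ln6_eq : ln 6 = ln 2 + ln 3.
Proof. replace 6 with (2 * 3) by lra. rewrite ln_mult by lra. ring. Qed.

Lemma ee_pos n s : 0 < ee n s.
Proof. apply exp_pos. Qed.

Lemma prod_le a b A B : 0 <= a -> 0 <= b -> a <= A -> b <= B -> a * b <= A * B.
Proof. intros. apply Rmult_le_compat; lra. Qed.

Lemma ln_pos_gt1 x : 1 < x -> 0 < ln x.
Proof. intro. rewrite <- ln_1. apply ln_increasing; lra. Qed.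

Lemma H_at s U3 U5 U7 L4 L6 :
  ee 3 s <= U3 -> ee 5 s <= U5 -> ee 7 s <= U7 -> L4 <= ee 4 s -> L6 <= ee 6 s ->
  0 <= L4 -> 0 <= L6 ->
  0 <= 1 - (793/500) * U3 + 2 * L4 - (2323/1000) * U5 + (1 + 1583/1000) * L6 - (2809/1000) * U7 ->
  0 <= HH s.
Proof.
  intros h3 h5 h7 h4 h6 hL4 hL6 hv. unfold HH.
  pose proof ln2_pos as l2. pose proof ln3_ub. pose proof ln3_lb. pose proof ln5_ub. pose proof ln7_ub.
  pose proof (ln_pos_gt1 3 ltac:(lra)). pose proof (ln_pos_gt1 5 ltac:(lra)). pose proof (ln_pos_gt1 7 ltac:(lra)).
  rewrite ln4_eq, ln6_eq.
  pose proof (ee_pos 3 s). pose proof (ee_pos 5 s). pose proof (ee_pos 7 s).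
  pose proof (ee_pos 4 s). pose proof (ee_pos 6 s).
  pose proof (prod_le (ln 3) (ee 3 s) ((793/500) * ln 2) U3 ltac:(lra) ltac:(lra) ltac:(lra) ltac:(lra)).
  pose proof (prod_le (ln 5) (ee 5 s) ((2323/1000) * ln 2) U5 ltac:(lra) ltac:(lra) ltac:(lra) ltac:(lra)).
  pose proof (prod_le (ln 7) (ee 7 s) ((2809/1000) * ln 2) U7 ltac:(lra) ltac:(lra) ltac:(lra) ltac:(lra)).
  pose proof (prod_le (2 * ln 2) L4 (2 * ln 2) (ee 4 s) ltac:(lra) ltac:(lra) ltac:(lra) ltac:(lra)).
  pose proof (prod_le ((1 + 1583/1000) * ln 2) L6 (ln 2 + ln 3) (ee 6 s) ltac:(lra) ltac:(lra) ltac:(lra) ltac:(lra)).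
  pose proof (Rmult_le_pos _ _ (Rlt_le _ _ l2) hv).
  lra.
Qed.

Lemma H_tail_at s U3 U5 U7 :
  ee 3 s <= U3 -> ee 5 s <= U5 -> ee 7 s <= U7 ->
  0 <= 1 - (793/500) * U3 - (2323/1000) * U5 - (2809/1000) * U7 ->
  0 <= HH s.
Proof.
  intros h3 h5 h7 hv. unfold HH.
  pose proof ln2_pos as l2. pose proof ln3_ub. pose proof ln3_lb. pose proof ln5_ub. pose proof ln7_ub.
  pose proof (ln_pos_gt1 3 ltac:(lra)). pose proof (ln_pos_gt1 5 ltac:(lra)). pose proof (ln_pos_gt1 7 ltac:(lra)).
  rewrite ln4_eq, ln6_eq.
  pose proof (ee_pos 3 s). pose proof (ee_pos 5 s). pose proof (ee_pos 7 s).
  pose proof (ee_pos 4 s). pose proof (ee_pos 6 s).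
  pose proof (prod_le (ln 3) (ee 3 s) ((793/500) * ln 2) U3 ltac:(lra) ltac:(lra) ltac:(lra) ltac:(lra)).
  pose proof (prod_le (ln 5) (ee 5 s) ((2323/1000) * ln 2) U5 ltac:(lra) ltac:(lra) ltac:(lra) ltac:(lra)).
  pose proof (prod_le (ln 7) (ee 7 s) ((2809/1000) * ln 2) U7 ltac:(lra) ltac:(lra) ltac:(lra) ltac:(lra)).
  pose proof (Rmult_le_pos _ _ (Rlt_le _ _ l2) hv).
  assert (0 <= 2 * ln 2 * ee 4 s) by (apply Rmult_le_pos; lra).
  assert (0 <= (ln 2 + ln 3) * ee 6 s) by (apply Rmult_le_pos; lra).
  lra.
Qed.
Lemma H_int0 s : (1/1) <= s -> s <= (26/25) -> 0 <= HH s.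
Proof.
  intros ha hc.
  apply (H_at s (1667/2500) (4001/10000) (2859/10000) (2431/5000) (3189/10000)); try lra.
  - exact (ee_ub 3 (1667/2500) 1 1 (1/1) s ltac:(lra) ltac:(lra) ltac:(lia) ltac:(numpow) ltac:(inrq) ltac:(lra)).
  - exact (ee_ub 5 (4001/10000) 1 1 (1/1) s ltac:(lra) ltac:(lra) ltac:(lia) ltac:(numpow) ltac:(inrq) ltac:(lra)).
  - exact (ee_ub 7 (2859/10000) 1 1 (1/1) s ltac:(lra) ltac:(lra) ltac:(lia) ltac:(numpow) ltac:(inrq) ltac:(lra)).
  - exact (ee_lb 4 (2431/5000) 26 25 (26/25) s ltac:(lra) ltac:(lra) ltac:(lia) ltac:(numpow) ltac:(inrq) ltac:(lra)).
  - exact (ee_lb 6 (3189/10000) 26 25 (26/25) s ltac:(lra) ltac:(lra) ltac:(lia) ltac:(numpow) ltac:(inrq) ltac:(lra)).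
Qed.

Lemma H_int1 s : (26/25) <= s -> s <= (11/10) -> 0 <= HH s.
Proof.
  intros ha hc.
  apply (H_at s (6561/10000) (1929/5000) (2719/10000) (583/1250) (597/2000)); try lra.
  - exact (ee_ub 3 (6561/10000) 26 25 (26/25) s ltac:(lra) ltac:(lra) ltac:(lia) ltac:(numpow) ltac:(inrq) ltac:(lra)).
  - exact (ee_ub 5 (1929/5000) 26 25 (26/25) s ltac:(lra) ltac:(lra) ltac:(lia) ltac:(numpow) ltac:(inrq) ltac:(lra)).
  - exact (ee_ub 7 (2719/10000) 26 25 (26/25) s ltac:(lra) ltac:(lra) ltac:(lia) ltac:(numpow) ltac:(inrq) ltac:(lra)).
  - exact (ee_lb 4 (583/1250) 11 10 (11/10) s ltac:(lra) ltac:(lra) ltac:(lia) ltac:(numpow) ltac:(inrq) ltac:(lra)).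
  - exact (ee_lb 6 (597/2000) 11 10 (11/10) s ltac:(lra) ltac:(lra) ltac:(lia) ltac:(numpow) ltac:(inrq) ltac:(lra)).
Qed.

Lemma H_int2 s : (11/10) <= s -> s <= (119/100) -> 0 <= HH s.
Proof.
  intros ha hc.
  apply (H_at s (6403/10000) (3651/10000) (1261/5000) (2191/5000) (169/625)); try lra.
  - exact (ee_ub 3 (6403/10000) 11 10 (11/10) s ltac:(lra) ltac:(lra) ltac:(lia) ltac:(numpow) ltac:(inrq) ltac:(lra)).
  - exact (ee_ub 5 (3651/10000) 11 10 (11/10) s ltac:(lra) ltac:(lra) ltac:(lia) ltac:(numpow) ltac:(inrq) ltac:(lra)).
  - exact (ee_ub 7 (1261/5000) 11 10 (11/10) s ltac:(lra) ltac:(lra) ltac:(lia) ltac:(numpow) ltac:(inrq) ltac:(lra)).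
  - exact (ee_lb 4 (2191/5000) 119 100 (119/100) s ltac:(lra) ltac:(lra) ltac:(lia) ltac:(numpow) ltac:(inrq) ltac:(lra)).
  - exact (ee_lb 6 (169/625) 119 100 (119/100) s ltac:(lra) ltac:(lra) ltac:(lia) ltac:(numpow) ltac:(inrq) ltac:(lra)).
Qed.

Lemma H_int3 s : (119/100) <= s -> s <= (133/100) -> 0 <= HH s.
Proof.
  intros ha hc.
  apply (H_at s (3087/5000) (1681/5000) (2253/10000) (497/1250) (1159/5000)); try lra.
  - exact (ee_ub 3 (3087/5000) 119 100 (119/100) s ltac:(lra) ltac:(lra) ltac:(lia) ltac:(numpow) ltac:(inrq) ltac:(lra)).
  - exact (ee_ub 5 (1681/5000) 119 100 (119/100) s ltac:(lra) ltac:(lra) ltac:(lia) ltac:(numpow) ltac:(inrq) ltac:(lra)).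
  - exact (ee_ub 7 (2253/10000) 119 100 (119/100) s ltac:(lra) ltac:(lra) ltac:(lia) ltac:(numpow) ltac:(inrq) ltac:(lra)).
  - exact (ee_lb 4 (497/1250) 133 100 (133/100) s ltac:(lra) ltac:(lra) ltac:(lia) ltac:(numpow) ltac:(inrq) ltac:(lra)).
  - exact (ee_lb 6 (1159/5000) 133 100 (133/100) s ltac:(lra) ltac:(lra) ltac:(lia) ltac:(numpow) ltac:(inrq) ltac:(lra)).
Qed.

Lemma H_int4 s : (133/100) <= s -> s <= (31/20) -> 0 <= HH s.
Proof.
  intros ha hc.
  apply (H_at s (5833/10000) (1479/5000) (1891/10000) (1707/5000) (91/500)); try lra.
  - exact (ee_ub 3 (5833/10000) 133 100 (133/100) s ltac:(lra) ltac:(lra) ltac:(lia) ltac:(numpow) ltac:(inrq) ltac:(lra)).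
  - exact (ee_ub 5 (1479/5000) 133 100 (133/100) s ltac:(lra) ltac:(lra) ltac:(lia) ltac:(numpow) ltac:(inrq) ltac:(lra)).
  - exact (ee_ub 7 (1891/10000) 133 100 (133/100) s ltac:(lra) ltac:(lra) ltac:(lia) ltac:(numpow) ltac:(inrq) ltac:(lra)).
  - exact (ee_lb 4 (1707/5000) 31 20 (31/20) s ltac:(lra) ltac:(lra) ltac:(lia) ltac:(numpow) ltac:(inrq) ltac:(lra)).
  - exact (ee_lb 6 (91/500) 31 20 (31/20) s ltac:(lra) ltac:(lra) ltac:(lia) ltac:(numpow) ltac:(inrq) ltac:(lra)).
Qed.

Lemma H_int5 s : (31/20) <= s -> s <= (49/25) -> 0 <= HH s.
Proof.
  intros ha hc.
  apply (H_at s (667/1250) (1209/5000) (359/2500) (2569/10000) (29/250)); try lra.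
  - exact (ee_ub 3 (667/1250) 31 20 (31/20) s ltac:(lra) ltac:(lra) ltac:(lia) ltac:(numpow) ltac:(inrq) ltac:(lra)).
  - exact (ee_ub 5 (1209/5000) 31 20 (31/20) s ltac:(lra) ltac:(lra) ltac:(lia) ltac:(numpow) ltac:(inrq) ltac:(lra)).
  - exact (ee_ub 7 (359/2500) 31 20 (31/20) s ltac:(lra) ltac:(lra) ltac:(lia) ltac:(numpow) ltac:(inrq) ltac:(lra)).
  - exact (ee_lb 4 (2569/10000) 49 25 (49/25) s ltac:(lra) ltac:(lra) ltac:(lia) ltac:(numpow) ltac:(inrq) ltac:(lra)).
  - exact (ee_lb 6 (29/250) 49 25 (49/25) s ltac:(lra) ltac:(lra) ltac:(lia) ltac:(numpow) ltac:(inrq) ltac:(lra)).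
Qed.

Lemma H_int6 s : (49/25) <= s -> s <= (3/1) -> 0 <= HH s.
Proof.
  intros ha hc.
  apply (H_at s (4519/10000) (1661/10000) (43/500) (1249/10000) (369/10000)); try lra.
  - exact (ee_ub 3 (4519/10000) 49 25 (49/25) s ltac:(lra) ltac:(lra) ltac:(lia) ltac:(numpow) ltac:(inrq) ltac:(lra)).
  - exact (ee_ub 5 (1661/10000) 49 25 (49/25) s ltac:(lra) ltac:(lra) ltac:(lia) ltac:(numpow) ltac:(inrq) ltac:(lra)).
  - exact (ee_ub 7 (43/500) 49 25 (49/25) s ltac:(lra) ltac:(lra) ltac:(lia) ltac:(numpow) ltac:(inrq) ltac:(lra)).
  - exact (ee_lb 4 (1249/10000) 3 1 (3/1) s ltac:(lra) ltac:(lra) ltac:(lia) ltac:(numpow) ltac:(inrq) ltac:(lra)).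
  - exact (ee_lb 6 (369/10000) 3 1 (3/1) s ltac:(lra) ltac:(lra) ltac:(lia) ltac:(numpow) ltac:(inrq) ltac:(lra)).
Qed.

Lemma H_tail s : (3/1) <= s -> 0 <= HH s.
Proof.
  intros ha.
  apply (H_tail_at s (741/2500) (321/5000) (47/2000)); try lra.
  - exact (ee_ub 3 (741/2500) 3 1 (3/1) s ltac:(lra) ltac:(lra) ltac:(lia) ltac:(numpow) ltac:(inrq) ltac:(lra)).
  - exact (ee_ub 5 (321/5000) 3 1 (3/1) s ltac:(lra) ltac:(lra) ltac:(lia) ltac:(numpow) ltac:(inrq) ltac:(lra)).
  - exact (ee_ub 7 (47/2000) 3 1 (3/1) s ltac:(lra) ltac:(lra) ltac:(lia) ltac:(numpow) ltac:(inrq) ltac:(lra)).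
Qed.

Lemma HH_nonneg s : 1 <= s -> 0 <= HH s.
Proof.
  intro hs1.
  destruct (Rle_lt_dec s (26/25)) as [h0|h0]; [apply H_int0; lra|].
  destruct (Rle_lt_dec s (11/10)) as [h1|h1]; [apply H_int1; lra|].
  destruct (Rle_lt_dec s (119/100)) as [h2|h2]; [apply H_int2; lra|].
  destruct (Rle_lt_dec s (133/100)) as [h3|h3]; [apply H_int3; lra|].
  destruct (Rle_lt_dec s (31/20)) as [h4|h4]; [apply H_int4; lra|].
  destruct (Rle_lt_dec s (49/25)) as [h5|h5]; [apply H_int5; lra|].
  destruct (Rle_lt_dec s (3/1)) as [h6|h6]; [apply H_int6; lra|].
  apply H_tail; lra.
Qed.


Definition GG s := bt s 2 - bt s 3 + bt s 4 - bt s 5 + bt s 6 - bt s 7.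

Lemma INR_lit2 : INR 2 = 2. Proof. simpl. lra. Qed.


Lemma T_ee s (k : nat) : (0 < k)%nat -> T s k = ee (INR k) s * T s 2.
Proof.
  intro hk. assert (h : 0 < INR k) by (apply lt_0_INR; lia).
  unfold T, ee, Rpower. rewrite INR_lit2.
  rewrite ln_div by lra.
  replace (s * (ln 2 - ln (INR k))) with (s * ln 2 + - (s * ln (INR k))) by ring.
  rewrite exp_plus, exp_Ropp.
  pose proof (exp_pos (s * ln 2)). pose proof (exp_pos (s * ln (INR k))).
  field. split; lra.
Qed.

Lemma GG_eq s : GG s = HH s * T s 2.
Proof.
  unfold GG, HH, bt.
  rewrite (T_ee s 3), (T_ee s 4), (T_ee s 5), (T_ee s 6), (T_ee s 7) by lia.
  replace (INR 2) with 2 by (simpl; lra).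
  replace (INR 3) with 3 by (simpl; lra).
  replace (INR 4) with 4 by (simpl; lra).
  replace (INR 5) with 5 by (simpl; lra).
  replace (INR 6) with 6 by (simpl; lra).
  replace (INR 7) with 7 by (simpl; lra).
  ring.
Qed.

Lemma GG_nonneg s : 1 <= s -> 0 <= GG s.
Proof.
  intro h. rewrite GG_eq. apply Rmult_le_pos; [now apply HH_nonneg|]. apply Rlt_le, T_pos.
Qed.

Lemma bt_decr s (k : nat) : 1 <= s -> (3 <= k)%nat -> bt s (S k) <= bt s k.
Proof.
  intros hs hk. unfold bt, T.
  set (x := INR k). assert (hx3 : 3 <= x) by (unfold x; replace 3 with (INR 3) by (simpl; lra); apply le_INR; lia).
  rewrite S_INR. fold x.
  assert (hl : 1 <= ln x).
  { rewrite <- (ln_exp 1). apply ln_le_mono; [apply exp_pos|]. pose proof exp_le_3. lra. }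
  assert (hlx : ln (x + 1) <= ln x * ((x + 1) / x)).
  { assert (ln (x + 1) = ln x + ln ((x + 1) / x)).
    { rewrite <- ln_mult by (try apply Rdiv_lt_0_compat; lra). f_equal. field. lra. }
    pose proof (ln_le_sub1 ((x + 1) / x) ltac:(apply Rdiv_lt_0_compat; lra)).
    replace ((x + 1) / x - 1) with (/ x) in H0 by (field; lra).
    replace (ln x * ((x + 1) / x)) with (ln x + ln x * / x) by (field; lra).
    assert (/ x <= ln x * / x).
    { rewrite <- (Rmult_1_l (/ x)) at 1. apply Rmult_le_compat_r; [|lra].
      apply Rlt_le, Rinv_0_lt_compat; lra. }
    lra. }
  assert (hP : Rpower x s * ((x + 1) / x) <= Rpower (x + 1) s).
  { replace (x + 1) with (x * ((x + 1) / x)) at 2 by (field; lra).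
    rewrite <- Rpower_mult_distr by (try apply Rdiv_lt_0_compat; lra).
    apply Rmult_le_compat_l; [apply Rlt_le, Rpower_pos|].
    set (t := (x + 1) / x). assert (1 <= t) by (unfold t; apply Rmult_le_reg_l with x; [lra|]; field_simplify; lra).
    replace s with (1 + (s - 1)) by ring. rewrite Rpower_plus, Rpower_1 by lra.
    pose proof (Rle_Rpower t 0 (s - 1) H ltac:(lra)). rewrite Rpower_O in H0 by lra. nra. }
  assert (hl0 : 0 <= ln (x + 1)) by (rewrite <- ln_1; apply ln_le_mono; lra).
  pose proof (Rpower_pos x s). pose proof (Rpower_pos (x + 1) s).
  apply Rle_trans with (ln x * ((x + 1) / x) * / (Rpower x s * ((x + 1) / x))).
  - apply Rmult_le_compat; try lra.
    + apply Rlt_le, Rinv_0_lt_compat; lra.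
    + apply Rinv_le_contravar; [apply Rmult_lt_0_compat; [lra| apply Rdiv_lt_0_compat; lra]| exact hP].
  - right. field. split; lra.
Qed.

Lemma bt_1 s : bt s 1 = 0.
Proof. unfold bt. simpl. rewrite ln_1. ring. Qed.

Lemma D_bound s N : 1 <= s -> (3 <= N)%nat ->
  GG s + bt s (S (2 * N)) <= 2 * ps (fun k => bt s (2 * k)) N - ps (bt s) (2 * N).
Proof.
  intros hs hN. induction hN as [|N hN IH].
  - unfold GG. cbn [ps Nat.mul Nat.add]. rewrite bt_1. lra.
  - replace (2 * S N)%nat with (S (S (2 * N))) by lia.
    change (ps (fun k => bt s (2 * k)) (S N)) with (ps (fun k => bt s (2 * k)) N + bt s (2 * S N)).
    change (ps (bt s) (S (S (2 * N)))) with (ps (bt s) (2 * N) + bt s (S (2 * N)) + bt s (S (S (2 * N)))).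
    replace (2 * S N)%nat with (S (S (2 * N))) by lia.
    pose proof (bt_decr s (S (S (2 * N))) hs ltac:(lia)).
    lra.
Qed.

From Stdlib Require Import ZArith Znumtheory ClassicalEpsilon Classical.
From mathcomp Require Import ssreflect ssrfun ssrbool eqtype ssrnat div prime.
From mathcomp Require Import zify.
Open Scope R_scope.

Lemma expn_pow (p j : nat) : Nat.pow p j = (p ^ j)%N.
Proof. elim: j => [|j IH] //=. by rewrite expnS IH mulnE. Qed.

Lemma zdiv_nat (n p : nat) : (0 < p)%N ->
  (Z.of_nat n | Z.of_nat p)%Z -> n %| p.
Proof.
move=> hp [c hc]. apply/dvdnP.
have hc0 : (0 <= c)%Z by nia.
exists (Z.to_nat c). apply Nat2Z.inj. rewrite mulnE Nat2Z.inj_mul Z2Nat.id //.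
Qed.

Lemma nat_zdiv (n p : nat) : n %| p -> (Z.of_nat n | Z.of_nat p)%Z.
Proof.
move/dvdnP=> [k ->]. exists (Z.of_nat k). by rewrite mulnE Nat2Z.inj_mul.
Qed.

Lemma nat_prime_iff p : nat_prime p <-> prime p.
Proof.
split.
- move=> /prime_alt [h1 h2]. apply/primeP. split; first lia.
  move=> d hd.
  have hp : (0 < p)%N by lia.
  have hdp : (d <= p)%N by apply: dvdn_leq.
  have hd0 : (0 < d)%N.
  { case: d hd hdp => //. rewrite dvd0n. move/eqP => E. lia. }
  case: (ltnP 1 d) => h1d; last by apply/orP; left; apply/eqP; lia.
  case: (ltnP d p) => hdp2; last by apply/orP; right; apply/eqP; lia.
  exfalso. apply: (h2 (Z.of_nat d)); first lia.
  by apply: nat_zdiv.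
- move/primeP=> [h1 h2]. apply/prime_alt. split; first lia.
  move=> n hn hdiv.
  have hn' : n = Z.of_nat (Z.to_nat n) by rewrite Z2Nat.id; lia.
  rewrite hn' in hdiv.
  have := zdiv_nat (Z.to_nat n) p ltac:(lia) hdiv.
  move/h2 => /orP [/eqP E|/eqP E]; lia.
Qed.

Lemma prime_ge2 p : prime p -> (2 <= p)%N.
Proof. by move/prime_gt1. Qed.

Lemma pp_unique p j r k : prime p -> prime r -> (0 < j)%N -> (0 < k)%N ->
  (p ^ j = r ^ k)%N -> p = r.
Proof.
move=> pp pr hj hk E.
have : p %| r ^ k by rewrite -E; apply: dvdn_exp.
rewrite (Euclid_dvdX _ _ pp) => /andP [h _].
by move: h; rewrite dvdn_prime2 // => /eqP.
Qed.

Lemma VM_pp p j : prime p -> (0 < j)%N -> vonMangoldt (p ^ j) = ln (INR p).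
Proof.
move=> pp hj. rewrite /vonMangoldt.
case: excluded_middle_informative => [hex|hn]; last first.
{ exfalso; apply: hn. exists p. split; first by apply/nat_prime_iff.
  exists j. split; first lia. by rewrite expn_pow. }
set r := epsilon _ _.
have : prime_power_base (p ^ j) r by apply: epsilon_spec.
move=> [/nat_prime_iff pr [k [hk E]]].
rewrite expn_pow in E.
by rewrite (pp_unique p j r k pp pr hj ltac:(lia) E).
Qed.

Lemma VM_nz q : vonMangoldt q <> 0 ->
  exists p j, prime p /\ (0 < j)%N /\ q = (p ^ j)%N.
Proof.
rewrite /vonMangoldt. case: excluded_middle_informative => [[p [/nat_prime_iff pp [j [hj E]]]]|] _ //.
exists p, j. split=> //. split; first lia. by rewrite -expn_pow.
Qed.

Lemma VM_ge0 q : 0 <= vonMangoldt q.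
Proof.
case: (Req_dec (vonMangoldt q) 0) => [->|/VM_nz [p [j [pp [hj ->]]]]]; first lra.
rewrite VM_pp //. have h2 := prime_gt1 pp.
rewrite -ln_1. apply: ln_le; first lra. apply: (le_INR 1). lia.
Qed.

Lemma VM_1 : vonMangoldt 1 = 0.
Proof.
case: (Req_dec (vonMangoldt 1) 0) => // /VM_nz [p [j [pp [hj E]]]].
have h2 := prime_gt1 pp. exfalso.
have : (p ^ 1 <= p ^ j)%N by rewrite leq_exp2l //; lia.
rewrite expn1 -E. lia.
Qed.



Lemma ps_ext f g N : (forall d, (0 < d)%N -> (d <= N)%N -> f d = g d) -> ps f N = ps g N.
Proof.
elim: N => [|N IH] H //=. rewrite IH; last by move=> d h1 h2; apply: H; lia.
by rewrite H.
Qed.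

Lemma ps_plus f g N : ps (fun d => f d + g d) N = ps f N + ps g N.
Proof. elim: N => [|N IH] /=; [lra| rewrite IH; lra]. Qed.

Lemma ps_scal c f N : ps (fun d => c * f d) N = c * ps f N.
Proof. elim: N => [|N IH] /=; [lra| rewrite IH; lra]. Qed.

Lemma ps_zero_tail f M N : (M <= N)%N -> (forall d, (M < d)%N -> (d <= N)%N -> f d = 0) ->
  ps f N = ps f M.
Proof.
elim: N => [|N IH] hMN H; first by have -> : M = 0%N by lia.
case: (ltnP M N.+1) => h.
- rewrite /= IH; [|lia| move=> d h1 h2; apply: H; lia]. rewrite H; lia || lra.
- by have -> : M = N.+1 by lia.
Qed.

Lemma ps_single q c N : (0 < q)%N -> (q <= N)%N ->
  ps (fun d => if d == q then c else 0) N = c.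
Proof.
move=> h1 h2. rewrite (ps_zero_tail _ q N) //; last first.
{ move=> d hd _. case: eqP => // E. lia. }
case: q h1 h2 => [|q] // _ _ /=.
rewrite eqxx (ps_zero_tail _ 0 q) //=; first lra.
move=> d hd hd2. case: eqP => // E; lia.
Qed.

Lemma ps_le f g N : (forall d, (0 < d)%N -> (d <= N)%N -> f d <= g d) -> ps f N <= ps g N.
Proof.
elim: N => [|N IH] H /=; first lra.
have := IH (fun d h1 h2 => H d h1 ltac:(lia)). have := H N.+1 ltac:(lia) ltac:(lia). lra.
Qed.

Lemma ps_ge0 f N : (forall d, (0 < d)%N -> 0 <= f d) -> 0 <= ps f N.
Proof.
move=> H. elim: N => [|N IH] /=; first lra. have := H N.+1 ltac:(lia). lra.
Qed.

Lemma ps_mono f M N : (forall d, (0 < d)%N -> 0 <= f d) -> (M <= N)%N -> ps f M <= ps f N.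
Proof.
move=> H. elim: N => [|N IH] hMN.
{ have -> : M = 0%N by lia. lra. }
case: (ltnP M N.+1) => h.
- have := IH ltac:(lia). have := H N.+1 ltac:(lia). simpl. lra.
- have -> : M = N.+1 by lia. lra.
Qed.

Lemma sumdiv X : (0 < X)%N ->
  ps (fun d => if d %| X then vonMangoldt d else 0) X = ln (INR X).
Proof.
elim/ltn_ind: X => X IH hX.
case: (ltnP 1 X) => hX1; last first.
{ have -> : X = 1%N by lia. simpl. rewrite VM_1 ln_1. lra. }
set p := pdiv X.
have pp : prime p by apply: pdiv_prime.
have hp2 := prime_gt1 pp.
have hpX : p %| X by apply: pdiv_dvd.
set Y := X %/ p.
have hXY : X = (p * Y)%N by rewrite /Y mulnC divnK.
have hY : (0 < Y)%N by move: hX; rewrite hXY; lia.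
have hYX : (Y < X)%N by rewrite hXY; nia.
set v := logn p Y.
set q := (p ^ v.+1)%N.
have hqX : q %| X by rewrite hXY /q expnS dvdn_pmul2l; [rewrite pfactor_dvdn //; lia | lia].
have hqY : ~~ (q %| Y) by rewrite /q pfactor_dvdn // /v; lia.
have hq0 : (0 < q)%N by rewrite /q expn_gt0; lia.
have hqle : (q <= X)%N by apply: dvdn_leq; lia.
have key : forall d, (0 < d)%N -> (d <= X)%N ->
  (if d %| X then vonMangoldt d else 0) =
  (if d %| Y then vonMangoldt d else 0) + (if d == q then ln (INR p) else 0).
{ move=> d hd hdX.
  case hdY: (d %| Y).
  - have -> : d %| X by rewrite hXY; apply: dvdn_mull.
    have -> : (d == q) = false by apply/eqP => E; move: hqY; rewrite -E hdY.
    lra.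
  - case hdX': (d %| X); last first.
    { have -> : (d == q) = false by apply/eqP => E; move: hdX'; rewrite E hqX.
      lra. }
    case: (Req_dec (vonMangoldt d) 0) => [E|/VM_nz [r [j [pr [hj Ed]]]]].
    + rewrite E. case: eqP => Edq; last lra.
      exfalso. move: E. rewrite Edq /q VM_pp //.
      have : 1 < INR p by apply: (lt_INR 1); lia.
      move=> h1 h2. have := ln_increasing 1 (INR p) ltac:(lra) h1. rewrite ln_1. lra.
    + subst d. have hrp : r = p.
      { case: (eqVneq r p) => // hne. exfalso.
        have cop : coprime (r ^ j) p.
        { rewrite coprime_pexpl // prime_coprime // dvdn_prime2 //. }
        move: hdY. rewrite -(Gauss_dvdr _ cop) -hXY hdX'. done. }
      subst r.
      have hj1 : (j <= v.+1)%N.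
      { have : p ^ j %| X by []. rewrite pfactor_dvdn // hXY lognM //; last lia.
        rewrite logn_prime // eqxx. rewrite /v. lia. }
      have hj2 : ~~ (j <= v)%N.
      { apply/negP => hjv. move: hdY. rewrite pfactor_dvdn // -/v. by rewrite hjv. }
      have -> : j = v.+1 by lia.
      rewrite eqxx VM_pp //. lra. }
rewrite (ps_ext _ _ X key) ps_plus ps_single //.
rewrite (ps_zero_tail (fun d => if d %| Y then vonMangoldt d else 0) Y X); last first.
{ move=> d h1 h2. case hd: (d %| Y) => //. have := dvdn_leq hY hd. lia. }
{ lia. }
rewrite IH // hXY mulnE mult_INR ln_mult; try (apply: (lt_INR 0); lia).
lra.
Qed.


Lemma conv_id (z : nat -> R) X : z 1%N = 1 -> (forall a b, (0 < a)%N -> (0 < b)%N -> z (a * b)%N = z a * z b) ->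
  ps (fun N => ln (INR N) * z N) X =
  ps (fun d => vonMangoldt d * z d * ps z (X %/ d)) X.
Proof.
move=> z1 zm. elim: X => [|X IH] //=.
set h := fun d => if d %| X.+1 then vonMangoldt d * z X.+1 else 0.
have step : forall d, (0 < d)%N -> (d <= X)%N ->
  vonMangoldt d * z d * ps z (X.+1 %/ d) =
  vonMangoldt d * z d * ps z (X %/ d) + h d.
{ move=> d hd _. have E := divnS X hd. rewrite /h.
  case hdv: (d %| X.+1); rewrite hdv /= in E; rewrite E /=.
  - have -> : z X.+1 = z d * z (X.+1 %/ d).
    { rewrite -zm //; last by rewrite divn_gt0 //; apply: dvdn_leq. by rewrite mulnC divnK. }
    rewrite E ?add0n ?add1n. lra.
  - rewrite ?add0n. lra. }
rewrite (ps_ext _ _ X step) ps_plus -IH.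
have hs := sumdiv X.+1 ltac:(lia).
have : ps h X.+1 = z X.+1 * ln (INR X.+1).
{ rewrite -hs -ps_scal. apply: ps_ext => d _ _. rewrite /h. case: ifP => _; lra. }
rewrite /= /h dvdnn divnn /=. rewrite z1. lra.
Qed.

Lemma T_mul s a b : (0 < a)%N -> (0 < b)%N -> T s (a * b)%N = T s a * T s b.
Proof.
  move=> ha hb. rewrite /T mulnE mult_INR -Rpower_mult_distr; try (apply: (lt_INR 0); lia).
  rewrite Rinv_mult. done.
Qed.

Lemma T_1 s : T s 1 = 1.
Proof. rewrite /T /= Rpower_base1 Rinv_1. done. Qed.

Lemma VMT_ge0 s d : 0 <= vonMangoldt d * T s d.
Proof. apply: Rmult_le_pos; [apply: VM_ge0 | apply: Rlt_le; apply: T_pos]. Qed.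

Lemma L_series s : 1 < s ->
  is_series (fun n => vonMangoldt (S n) * T s (S n))
    (Series (fun n => bt s (S n)) / Series (fun n => T s (S n))).
Proof.
  move=> hs.
  set Zs := Series (fun n => T s (S n)).
  set As := Series (fun n => bt s (S n)).
  have hZ : is_lim_seq (ps (T s)) Zs.
  { apply/series_ps. apply: Series_correct. by apply: ex_series_T. }
  have hA : is_lim_seq (ps (bt s)) As.
  { apply/series_ps. apply: Series_correct. by apply: ex_series_bt. }
  have Tinc : forall n, ps (T s) n <= ps (T s) n.+1.
  { move=> n /=. have := T_pos s n.+1. lra. }
  have Ainc : forall n, ps (bt s) n <= ps (bt s) n.+1.
  { move=> n /=. have := bt_ge0 s n. lra. }
  have TleZ : forall n, ps (T s) n <= Zs := is_lim_seq_incr_compare _ _ hZ Tinc.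
  have AleA : forall n, ps (bt s) n <= As := is_lim_seq_incr_compare _ _ hA Ainc.
  have hZ1 : 1 <= Zs.
  { have := TleZ 1%N. rewrite /= T_1. lra. }
  set Lp := ps (fun d => vonMangoldt d * T s d).
  have conv : forall X, ps (bt s) X = ps (fun d => vonMangoldt d * T s d * ps (T s) (X %/ d)) X.
  { move=> X. rewrite /bt. apply: conv_id; [exact: T_1 | exact: T_mul]. }
  have Tps_mono : forall m n, (m <= n)%N -> ps (T s) m <= ps (T s) n.
  { move=> m n hmn. apply: ps_mono => // d _. apply: Rlt_le. apply: T_pos. }
  have upper : forall X, ps (bt s) X <= Lp X * Zs.
  { move=> X. rewrite conv /Lp Rmult_comm -ps_scal. apply: ps_le => d hd _.
    have := VMT_ge0 s d. have := TleZ (X %/ d). nra. }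
  have lower : forall X Y, (0 < X)%N -> Lp Y * ps (T s) X <= As.
  { move=> X Y hX. apply: Rle_trans (AleA (X * Y)%N). rewrite conv.
    apply: Rle_trans (ps_mono _ Y (X * Y) _ _); last first.
    - rewrite -[Y in (Y <= _)%N]mul1n. by apply: leq_mul.
    - move=> d hd. have := VMT_ge0 s d. have := ps_ge0 (T s) (X * Y %/ d) (fun k _ => Rlt_le _ _ (T_pos s k)). nra.
    - rewrite /Lp Rmult_comm -ps_scal. apply: ps_le => d hd hdY.
      have : (X <= X * Y %/ d)%N by rewrite leq_divRL // leq_mul2l; lia.
      move/Tps_mono. have := VMT_ge0 s d. nra. }
  have LleA : forall Y, Lp Y * Zs <= As.
  { move=> Y.
    have := is_lim_seq_le (fun X => Lp Y * ps (T s) X.+1) (fun _ => As) (Lp Y * Zs) As.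
    apply => //.
    - move=> n. by apply: lower.
    - apply: (is_lim_seq_scal_l (fun X => ps (T s) X.+1) (Lp Y) Zs).
      by apply/(is_lim_seq_incr_1 (ps (T s))).
    - exact: is_lim_seq_const. }
  have Linc : forall n, Lp n <= Lp n.+1.
  { move=> n. rewrite /Lp /=. have := VMT_ge0 s n.+1. lra. }
  have [Ls hL] : exists Ls : R, is_lim_seq Lp Ls.
  { apply: (ex_finite_lim_seq_incr Lp (As / Zs) Linc) => n.
    have := LleA n. move=> h. apply: (Rmult_le_reg_r Zs); first lra.
    rewrite /Rdiv Rmult_assoc Rinv_l; lra. }
  have LleL : forall n, Lp n <= Ls := is_lim_seq_incr_compare _ _ hL Linc.
  have h1 : Ls * Zs <= As.
  { have := is_lim_seq_le (fun X => Lp X * Zs) (fun _ => As) (Ls * Zs) As.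
    apply => //.
    - exact: (is_lim_seq_scal_r Lp Zs Ls hL).
    - exact: is_lim_seq_const. }
  have h2 : As <= Ls * Zs.
  { have := is_lim_seq_le (ps (bt s)) (fun X => Ls * Zs) As (Ls * Zs).
    apply => //.
    - move=> n. apply: Rle_trans (upper n) _. have := LleL n. nra.
    - exact: is_lim_seq_const. }
  have -> : As / Zs = Ls.
  { apply: (Rmult_eq_reg_r Zs); last lra. rewrite /Rdiv Rmult_assoc Rinv_l; lra. }
  exact: (proj2 (series_ps (fun d => vonMangoldt d * T s d) Ls) hL).
Qed.

Lemma bt_double s k : (0 < k)%N ->
  Rpower 2 s * bt s (Nat.mul 2 k) = ln 2 * T s k + bt s k.
Proof.
  move=> hk. rewrite /bt -mulnE T_mul //. rewrite mulnE mult_INR ln_mult; try (apply: (lt_INR 0); lia).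
  have -> : INR 2 = 2 by rewrite /=; lra.
  have h2 : Rpower 2 s * T s 2 = 1.
  { rewrite /T. have -> : INR 2 = 2 by rewrite /=; lra. apply: Rinv_r. have := Rpower_pos 2 s. lra. }
  have : Rpower 2 s * ((ln 2 + ln (INR k)) * (T s 2 * T s k)) = (Rpower 2 s * T s 2) * ((ln 2 + ln (INR k)) * T s k) by ring.
  rewrite h2. lra.
Qed.

Lemma A_le s : 1 < s ->
  Series (fun n => bt s (S n)) * Rpower 2 s <=
  2 * (ln 2 * Series (fun n => T s (S n)) + Series (fun n => bt s (S n))).
Proof.
  move=> hs.
  set Zs := Series (fun n => T s (S n)).
  set As := Series (fun n => bt s (S n)).
  set P := Rpower 2 s.
  have hP : 0 < P by apply: Rpower_pos.
  have hZ : is_lim_seq (ps (T s)) Zs.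
  { apply/series_ps. apply: Series_correct. by apply: ex_series_T. }
  have hA : is_lim_seq (ps (bt s)) As.
  { apply/series_ps. apply: Series_correct. by apply: ex_series_bt. }
  have hE : forall N, P * ps (fun k => bt s (Nat.mul 2 k)) N = ln 2 * ps (T s) N + ps (bt s) N.
  { move=> N. rewrite -ps_scal -ps_scal -ps_plus. apply: ps_ext => d hd _. exact: bt_double. }
  set w := fun N => 2 * (ln 2 * ps (T s) N + ps (bt s) N) / P - ps (bt s) (Nat.mul 2 N).
  have hw : forall N, (3 <= N)%coq_nat -> 0 <= w N.
  { move=> N hN. have := D_bound s N ltac:(lra) hN.
    have := GG_nonneg s ltac:(lra). have := bt_ge0 s (Nat.mul 2 N).
    have -> : w N = 2 * ps (fun k => bt s (Nat.mul 2 k)) N - ps (bt s) (Nat.mul 2 N).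
    { rewrite /w -hE. field. lra. }
    lra. }
  have hA2 : is_lim_seq (fun N => ps (bt s) (Nat.mul 2 N)) As.
  { apply: (is_lim_seq_subseq (ps (bt s)) As (fun N => Nat.mul 2 N)) => //.
    move=> Q [N HN]. exists N => n hn. apply: HN. lia. }
  have hwl : is_lim_seq w (2 * (ln 2 * Zs + As) / P - As).
  { apply: is_lim_seq_minus' => //.
    have hl : is_lim_seq (fun N => ln 2 * ps (T s) N + ps (bt s) N) (ln 2 * Zs + As).
    { apply: is_lim_seq_plus' => //. exact: (is_lim_seq_scal_l (ps (T s)) (ln 2) Zs hZ). }
    have H2 : is_lim_seq (fun N => 2 / P * (ln 2 * ps (T s) N + ps (bt s) N)) (2 / P * (ln 2 * Zs + As))
      := is_lim_seq_scal_l _ _ _ hl.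
    have -> : 2 * (ln 2 * Zs + As) / P = 2 / P * (ln 2 * Zs + As) by rewrite /Rdiv; ring.
    apply: is_lim_seq_ext H2 => N. rewrite /Rdiv. ring. }
  have : Rbar_le 0 (2 * (ln 2 * Zs + As) / P - As).
  { apply: (is_lim_seq_le (fun _ => 0) (fun N => w (N + 3)%coq_nat) 0).
    - move=> n. apply: hw. lia.
    - exact: is_lim_seq_const.
    - by apply/(is_lim_seq_incr_n w 3). }
  rewrite /=. move=> h.
  have : 0 <= 2 * (ln 2 * Zs + As) - As * P.
  { have -> : 2 * (ln 2 * Zs + As) - As * P = (2 * (ln 2 * Zs + As) / P - As) * P by field; lra.
    apply: Rmult_le_pos; lra. }
  lra.
Qed.

Theorem lemma3p2 (u : R) (hu : 0 < u) :
  exists zeta' : R,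
    is_derive zeta (1 + u) zeta' /\
    is_series (fun n : nat => vonMangoldt (S n) / Rpower (INR (S n)) (1 + u))
              (- zeta' / zeta (1 + u)) /\
    - zeta' / zeta (1 + u) <= ln 2 / (Rpower 2 u - 1) /\
    ln 2 / (Rpower 2 u - 1) <= 1 / u.
Proof.
  have hs : 1 < 1 + u by lra.
  exists (- Series (fun k => bt (1 + u) (S k))).
  have hZ : zeta (1 + u) = Series (fun n => T (1 + u) (S n)) by [].
  have hRu : 1 + u * ln 2 <= Rpower 2 u.
  { rewrite /Rpower. exact: exp_ineq1_le. }
  have l2 := ln2_pos.
  have hR1 : 0 < Rpower 2 u - 1 by nra.
  have hlast : ln 2 / (Rpower 2 u - 1) <= 1 / u.
  { apply: div_le_cross => //. nra. }
  split; first exact: zeta_deriv.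
  rewrite Ropp_involutive hZ.
  split; first exact: (L_series (1 + u) hs).
  split; last exact: hlast.
  set Zs := Series (fun n => T (1 + u) (S n)).
  set As := Series (fun n => bt (1 + u) (S n)).
  have hA := A_le (1 + u) hs. rewrite -/Zs -/As in hA.
  have hP : Rpower 2 (1 + u) = 2 * Rpower 2 u by rewrite Rpower_plus Rpower_1; lra.
  rewrite hP in hA.
  have hZ1 : 1 <= Zs.
  { have hZl : is_lim_seq (ps (T (1 + u))) Zs.
    { apply/series_ps. apply: Series_correct. by apply: ex_series_T. }
    have := is_lim_seq_incr_compare _ _ hZl (fun n => ltac:(simpl; have := T_pos (1 + u) n.+1; lra)) 1%N.
    rewrite /= T_1. lra. }
  apply: div_le_cross; try lra.
Qed.
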